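(* Let $\mathfrak{t},\mathfrak{w}$ be sesquilinear forms on $\mathbb{C}^n$ with $\mathfrak{w}\geq0$. (i) The following are equivalent: (a) $\mathfrak{t}$ is $\mathfrak{w}$-left bounded; (b) $\mathfrak{t}$ is $\mathfrak{w}$-left regular; (c) $\ker(\mathfrak{w})\subseteq\ker(\mathfrak{t})$. (ii) $\mathfrak{t}$ is $\mathfrak{w}$-left strongly singular if and only if $\ker(\mathfrak{w})+\ker(\mathfrak{t})=\mathbb{C}^n$.
   Context: A sesquilinear form on a complex vector space $\mathcal{D}$ is a map $\mathfrak{t}:\mathcal{D}\times\mathcal{D}\to\mathbb{C}$, linear in the first and anti-linear in the second variable; write $\mathfrak{t}[f]=\mathfrak{t}(f,f)$; it is non-negative ($\mathfrak{t}\geq0$) if $\mathfrak{t}[f]\geq0$ for all $f$. $\ker(\mathfrak{t}):=\{f\in\mathcal{D}:\mathfrak{t}(f,g)=0\ \forall g\in\mathcal{D}\}$. For non-negative forms $\mathfrak{u},\mathfrak{w}$: $\mathfrak{u}$ is $\mathfrak{w}$-absolutely continuous if $\mathfrak{w}[f_n]\to0$ and $\mathfrak{u}[f_n-f_m]\to0$ imply $\mathfrak{u}[f_n]\to0$; $\mathfrak{u}$ is $\mathfrak{w}$-singular if for every $f$ there is $\{f_n\}$ with $\mathfrak{w}[f_n]\to0$ and $\mathfrak{u}[f-f_n]\to0$. $M_l(\mathfrak{t})$ is the set of non-negative forms $\mathfrak{s}_1$ for which there is a non-negative form $\mathfrak{s}_2$ with $|\mathfrak{t}(f,g)|\leq\mathfrak{s}_1[f]^{1/2}\mathfrak{s}_2[g]^{1/2}$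 for all $f,g$. $\mathfrak{t}$ is $\mathfrak{w}$-left bounded if $C\mathfrak{w}\in M_l(\mathfrak{t})$ for some $C>0$; $\mathfrak{w}$-left regular if some $\mathfrak{s}_1\in M_l(\mathfrak{t})$ is $\mathfrak{w}$-absolutely continuous; $\mathfrak{w}$-left strongly singular if some $\mathfrak{s}_1\in M_l(\mathfrak{t})$ is $\mathfrak{w}$-singular. *)

(* Defs.v *)
(* C^n is modelled as row vectors 'rV[R[i]]_n, where
   R[i] = complex R (mathcomp-real-closed) for R : realType (the reals). *)
From HB Require Import structures.
From mathcomp Require Import all_boot all_order all_algebra.
From mathcomp Require Import reals.
From mathcomp Require Import complex.
Set Implicit Arguments. Unset Strict Implicit. Unset Printing Implicit Defensive.
Import Order.TTheory GRing.Theory Num.Theory.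
Local Open Scope ring_scope.

Section SesqForms.
Variables (R : realType) (n : nat).
Local Notation C := R[i].
Local Notation V := 'rV[C]_n.

Definition sform := V -> V -> C.

Definition is_sesquilinear (t : sform) : Prop :=
  (forall (a : C) (f g h : V), t (a *: f + g) h = a * t f h + t g h) /\
  (forall (a : C) (f g h : V), t f (a *: g + h) = a^* * t f g + t f h).

(* t[f] >= 0 for all f (order of C: real and non-negative) *)
Definition nonneg (t : sform) : Prop := forall f : V, 0 <= t f f.

Definition nnform (t : sform) : Prop := is_sesquilinear t /\ nonneg t.

Definition kerf (t : sform) (f : V) : Prop := forall g : V, t f g = 0.

Definition cvg0 (x : nat -> C) : Prop :=
  forall e : C, 0 < e -> exists N : nat, forall k, (N <= k)%N -> `|x k| < e.

Definition cvg0_2 (x : nat -> nat -> C) : Prop :=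
  forall e : C, 0 < e -> exists N : nat,
    forall k l, (N <= k)%N -> (N <= l)%N -> `|x k l| < e.

Definition abs_continuous (u w : sform) : Prop :=
  forall fs : nat -> V,
    cvg0 (fun k => w (fs k) (fs k)) ->
    cvg0_2 (fun k l => u (fs k - fs l) (fs k - fs l)) ->
    cvg0 (fun k => u (fs k) (fs k)).

Definition singular (u w : sform) : Prop :=
  forall f : V, exists fs : nat -> V,
    cvg0 (fun k => w (fs k) (fs k)) /\
    cvg0 (fun k => u (f - fs k) (f - fs k)).

Definition in_Ml (t s1 : sform) : Prop :=
  nnform s1 /\ exists s2 : sform, nnform s2 /\
    forall f g : V, `|t f g| <= sqrtC (s1 f f) * sqrtC (s2 g g).

Definition left_bounded (t w : sform) : Prop :=
  exists c : C, 0 < c /\ in_Ml t (fun f g => c * w f g).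

Definition left_regular (t w : sform) : Prop :=
  exists s1 : sform, in_Ml t s1 /\ abs_continuous s1 w.

Definition left_strongly_singular (t w : sform) : Prop :=
  exists s1 : sform, in_Ml t s1 /\ singular s1 w.

End SesqForms.
Arguments sform : clear implicits.

(* Main.v *)
Require Import Defs.
From HB Require Import structures.
From mathcomp Require Import all_boot all_order all_algebra.
From mathcomp Require Import reals.
From mathcomp Require Import complex.
From mathcomp Require Import ring.
Import Order.TTheory GRing.Theory Num.Theory.
Local Open Scope ring_scope.

Module Helpers.
Set Implicit Arguments. Unset Strict Implicit. Unset Printing Implicit Defensive.


Section Aux.
Variable R : realType.
Local Notation C := R[i].

Lemma cvg0_const (x : C) : cvg0 (fun _ : nat => x) -> x = 0.
Proof.
move=> H; apply/eqP; apply/negPn/negP => nx.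
have x0 : 0 < `|x| by rewrite normr_gt0.
have [N /(_ N (leqnn N))] := H `|x| x0.
by rewrite ltxx.
Qed.

Lemma cvg0_0 : cvg0 (fun _ : nat => (0 : C)).
Proof. by move=> e e0; exists 0%N => k _; rewrite normr0. Qed.

Lemma cvg0_add (x y : nat -> C) : cvg0 x -> cvg0 y -> cvg0 (fun k => x k + y k).
Proof.
move=> hx hy e e0.
have e2 : 0 < e / 2 by rewrite divr_gt0 // ltr0n.
have [N1 H1] := hx _ e2; have [N2 H2] := hy _ e2.
exists (maxn N1 N2) => k; rewrite geq_max => /andP[k1 k2].
apply: (le_lt_trans (ler_normD _ _)).
by rewrite [e]splitr ltrD // ?H1 ?H2.
Qed.

Lemma cvg0_scale (c : C) (x : nat -> C) : cvg0 x -> cvg0 (fun k => c * x k).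
Proof.
move=> hx e e0.
have c1 : 0 < `|c| + 1 by rewrite ltr_wpDl.
have [N H] := hx _ (divr_gt0 e0 c1).
exists N => k kN; rewrite normrM.
apply: (le_lt_trans (y := (`|c| + 1) * `|x k|)).
  by rewrite ler_wpM2r // lerDl.
by rewrite mulrC -ltr_pdivlMr // H.
Qed.

Lemma cvg0_opp (x : nat -> C) : cvg0 x -> cvg0 (fun k => - x k).
Proof. by move=> hx e e0; have [N H] := hx e e0; exists N => k kN; rewrite normrN H. Qed.

Lemma cvg0_sum (I : Type) (r : seq I) (x : I -> nat -> C) :
  (forall i, cvg0 (x i)) -> cvg0 (fun k => \sum_(i <- r) x i k).
Proof.
move=> hx; elim: r => [|a r IH].
  by move=> e e0; exists 0%N => k _; rewrite big_nil normr0.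
have := cvg0_add (hx a) IH => H e e0; have [N HN] := H e e0.
by exists N => k kN; rewrite big_cons HN.
Qed.

Lemma cvg0_dom (u a : nat -> C) (B : C) : 0 <= B -> cvg0 a ->
  (forall k, `|u k| ^+ 2 <= `|a k| * B) -> cvg0 u.
Proof.
move=> B0 ha hd e e0.
have B1 : 0 < B + 1 by rewrite ltr_wpDl.
have [N H] := ha _ (divr_gt0 (exprn_gt0 2 e0) B1).
exists N => k kN.
rewrite -(ltr_pXn2r (n := 2)) // ?nnegrE //; last exact: ltW.
apply: (le_lt_trans (hd k)).
apply: (le_lt_trans (y := e ^+ 2 / (B + 1) * B)).
  by rewrite ler_wpM2r // ltW // H.
rewrite mulrAC ltr_pdivrMr // ltr_pM2l ?exprn_gt0 //.
by rewrite ltrDl ltr01.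
Qed.

End Aux.


Section Sesq.
Variables (R : realType) (n : nat).
Local Notation C := R[i].
Local Notation V := 'rV[C]_n.
Variable s : sform R n.
Hypothesis hs : is_sesquilinear s.

Lemma s0l h : s 0 h = 0.
Proof.
have := hs.1 1 0 0 h; rewrite scale1r addr0 mul1r.
by move/(congr1 (fun z => z - s 0 h)); rewrite subrr addrK.
Qed.
Lemma sDl f g h : s (f + g) h = s f h + s g h.
Proof. by have := hs.1 1 f g h; rewrite scale1r mul1r. Qed.
Lemma sZl a f h : s (a *: f) h = a * s f h.
Proof. by have := hs.1 a f 0 h; rewrite addr0 s0l addr0. Qed.
Lemma sNl f h : s (- f) h = - s f h.
Proof. by rewrite -scaleN1r sZl mulN1r. Qed.
Lemma sBl f g h : s (f - g) h = s f h - s g h.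
Proof. by rewrite sDl sNl. Qed.

Lemma s0r f : s f 0 = 0.
Proof.
have := hs.2 1 f 0 0; rewrite scale1r addr0 rmorph1 mul1r.
by move/(congr1 (fun z => z - s f 0)); rewrite subrr addrK.
Qed.
Lemma sDr f g h : s f (g + h) = s f g + s f h.
Proof. by have := hs.2 1 f g h; rewrite scale1r rmorph1 mul1r. Qed.
Lemma sZr a f g : s f (a *: g) = a^* * s f g.
Proof. by have := hs.2 a f g 0; rewrite addr0 s0r addr0. Qed.
Lemma sNr f h : s f (- h) = - s f h.
Proof. by rewrite -scaleN1r sZr rmorphN1 mulN1r. Qed.
Lemma sBr f g h : s f (g - h) = s f g - s f h.
Proof. by rewrite sDr sNr. Qed.

Lemma s_sumr f (I : Type) (r : seq I) (F : I -> V) :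
  s f (\sum_(i <- r) F i) = \sum_(i <- r) s f (F i).
Proof. exact: (big_morph (s f) (sDr f) (s0r f)). Qed.
Lemma s_suml g (I : Type) (r : seq I) (F : I -> V) :
  s (\sum_(i <- r) F i) g = \sum_(i <- r) s (F i) g.
Proof. exact: (big_morph (s^~ g) (fun x y => sDl x y g) (s0l g)). Qed.

Lemma s_expr f g : s f g = \sum_(j < n) (g 0 j)^* * s f 'e_j.
Proof.
rewrite {1}(row_sum_delta g) s_sumr; apply: eq_bigr => j _; exact: sZr.
Qed.
Lemma s_expl f g : s f g = \sum_(j < n) f 0 j * s 'e_j g.
Proof.
rewrite {1}(row_sum_delta f) s_suml; apply: eq_bigr => j _; exact: sZl.
Qed.

Definition Ms : 'M[C]_n := \matrix_(i, j) s 'e_i 'e_j.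

Lemma sMs f j : s f 'e_j = (f *m Ms) 0 j.
Proof. by rewrite s_expl mxE; apply: eq_bigr => i _; rewrite mxE. Qed.

Lemma s_mx f g : s f g = \sum_(j < n) (g 0 j)^* * (f *m Ms) 0 j.
Proof. by rewrite s_expr; apply: eq_bigr => j _; rewrite sMs. Qed.

Lemma kerf_mx f : f *m Ms = 0 -> kerf s f.
Proof. by move=> H g; rewrite s_mx H big1 // => j _; rewrite mxE mulr0. Qed.

Lemma kerf_mx' f : kerf s f -> f *m Ms = 0.
Proof. by move=> H; apply/rowP => j; rewrite -sMs H mxE. Qed.

End Sesq.

Section CS.
Variables (R : realType) (n : nat).
Local Notation C := R[i].
Local Notation V := 'rV[C]_n.
Variable s : sform R n.
Hypothesis hs : nnform s.

Lemma ringid2 (j c d e k : C) :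
  j * (c^* - d^* + c - d) =
  e + j * c^* + (- j * d^* + - j * (j * k)) -
  (e + - j * c + (j * d + j * (- j * k))).
Proof. ring. Qed.

Lemma herm f g : s g f = (s f g)^*.
Proof.
have [hq hp] := hs.
have cf := conj_Creal (ger0_real (hp f)).
have cg := conj_Creal (ger0_real (hp g)).
have E1 := conj_Creal (ger0_real (hp (f + g))).
rewrite !(sDl hq, sDr hq) !rmorphD /= cf cg in E1.
have E2 := conj_Creal (ger0_real (hp (f + 'i *: g))).
rewrite !(sDl hq, sDr hq, sZl hq, sZr hq) !rmorphD !rmorphM /= cf cg !conjCi rmorphN /= conjCi opprK in E2.
move: E1 => /eqP; rewrite -subr_eq0 => /eqP E1.
move: E2 => /eqP; rewrite -subr_eq0 => /eqP E2.
have F1 : (s f g)^* + (s g f)^* - (s f g + s g f) = 0 by rewrite -E1; ring.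
have F2 : 'i * ((s f g)^* - (s g f)^* + s f g - s g f) = 0.
  by rewrite -E2; apply: ringid2.
move: F2 => /eqP; rewrite mulf_eq0 (negPf (neq0Ci _)) /= => /eqP F2.
have : 2%:R * ((s f g)^* - s g f) = 0.
  by rewrite -[RHS](addr0 0) -{1}F1 -{1}F2; ring.
by move/eqP; rewrite mulf_eq0 pnatr_eq0 /= subr_eq0 => /eqP.
Qed.

Lemma CS2 f g : `|s f g| ^+ 2 <= s f f * s g g.
Proof.
have [hq hp] := hs.
have key : forall tau : C, 0 <= tau ->
   0 <= s f f - 2%:R * tau * (s f g * (s f g)^*) + tau ^+ 2 * (s f g * (s f g)^*) * s g g.
  move=> tau t0; have ht := conj_Creal (ger0_real t0).
  suff -> : s f f - 2%:R * tau * (s f g * (s f g)^*) + tau ^+ 2 * (s f g * (s f g)^*) * s g g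
    = s (f - (tau * s f g) *: g) (f - (tau * s f g) *: g) by exact: hp.
  rewrite !(sBl hq, sBr hq, sZl hq, sZr hq) (herm f g) rmorphM /= ht.
  ring.
rewrite normCK.
set N := s f g * (s f g)^*.
have N0 : 0 <= N by rewrite /N -normCK exprn_ge0.
have A0 := hp f; have B0 := hp g.
have [Bz|Bnz] := eqVneq (s g g) 0.
  rewrite Bz mulr0.
  have [Nz|Nnz] := eqVneq N 0; first by rewrite Nz.
  have Np : 0 < N by rewrite lt_def Nnz N0.
  have := key ((s f f + 1) / (2%:R * N)) (divr_ge0 (addr_ge0 A0 ler01) (mulr_ge0 (ler0n _ 2) N0)).
  have -> : s f f - 2%:R * ((s f f + 1) / (2%:R * N)) * N + ((s f f + 1) / (2%:R * N)) ^+ 2 * N * s g g = -1.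
    rewrite Bz mulr0 addr0; field; rewrite ?Nnz ?pnatr_eq0 //.

  by rewrite oppr_ge0 ler10.
have Bp : 0 < s g g by rewrite lt_def Bnz B0.
have Bi : 0 <= (s g g)^-1 by rewrite invr_ge0.
have := key (s g g)^-1 Bi.
have -> : s f f - 2%:R * (s g g)^-1 * N + (s g g)^-1 ^+ 2 * N * s g g = s f f - N / s g g.
  by field.
by rewrite subr_ge0 ler_pdivrMr // mulrC.
Qed.

Lemma CS f g : `|s f g| <= sqrtC (s f f) * sqrtC (s g g).
Proof.
have [hq hp] := hs.
rewrite -(ler_pXn2r (n := 2)) // ?nnegrE ?mulr_ge0 ?sqrtC_ge0 ?hp //.
by rewrite exprMn !sqrtCK CS2.
Qed.

End CS.


Section LinAlg.
Variable R : realType.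
Local Notation C := R[i].

Lemma colspace (m p q : nat) (P : 'M[C]_(m,p)) (Q : 'M[C]_(m,q)) :
  (forall f : 'rV_m, f *m P = 0 -> f *m Q = 0) -> exists B, Q = P *m B.
Proof.
move=> H.
have kQ : kermx P *m Q = 0.
  apply/row_matrixP => i; rewrite row_mul row0; apply: H.
  by rewrite -row_mul mulmx_ker row0.
have k1 : (kermx P <= kermx (row_mx P Q))%MS.
  by rewrite sub_kermx mul_mx_row mulmx_ker kQ row_mx0.
have k2 : (kermx (row_mx P Q) <= kermx P)%MS.
  rewrite sub_kermx; have := mulmx_ker (row_mx P Q).
  by rewrite mul_mx_row -row_mx0 => /eq_row_mx [-> _].
have rk : \rank (row_mx P Q) = \rank P.
  have := eqmx_rank (introT andP (conj k1 k2)); rewrite !mxrank_ker => e.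
  by rewrite -(subKn (rank_leq_row (row_mx P Q))) -e subKn // rank_leq_row.
have sub : (P^T + Q^T <= P^T)%MS.
  have [_ <-] := mxrank_leqif_sup (addsmxSl P^T Q^T).
  by rewrite addsmxE -tr_row_mx !mxrank_tr rk.
have /submxP [D hD] : (Q^T <= P^T)%MS := submx_trans (addsmxSr _ _) sub.
by exists D^T; rewrite -(trmxK Q) hD trmx_mul trmxK.
Qed.

Lemma mx_closure (p m : nat) (M : 'M[C]_(p,m)) (y : 'rV_m) (z : nat -> 'rV_p) :
  (forall j, cvg0 (fun k => (z k *m M - y) 0 j)) -> (y <= M)%MS.
Proof.
move=> H; rewrite submxE; apply/eqP/rowP => j; rewrite [RHS]mxE.
have e : forall k, \sum_i (cokermx M i j * (z k *m M - y) 0 i) = - (y *m cokermx M) 0 j.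
  move=> k; transitivity (((z k *m M - y) *m cokermx M) 0 j).
    by rewrite mxE; apply: eq_bigr => i _; rewrite mulrC.
  by rewrite mulmxBl -mulmxA mulmx_coker mulmx0 sub0r mxE.
have Hs := @cvg0_sum R _ (index_enum 'I_m) (fun i k => cokermx M i j * (z k *m M - y) 0 i)
  (fun i => cvg0_scale _ (H i)). apply/eqP; rewrite -oppr_eq0; apply/eqP; apply: cvg0_const.
by move=> eps eps0; have [N HN] := Hs eps eps0; exists N => k kN; rewrite -(e k) HN.
Qed.

Variable n : nat.
Local Notation V := 'rV[C]_n.

Lemma nnform_comp (m : nat) (s : sform R m) (A : 'M[C]_(n, m)) :
  nnform s -> nnform (fun f g : V => s (f *m A) (g *m A)).
Proof.
move=> [[h1 h2] hp]; split; last by move=> f; exact: hp.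
split=> a f g h; rewrite mulmxDl -scalemxAl; [exact: h1 | exact: h2].
Qed.

Definition stdf : sform R n := fun f g => \sum_(j < n) f 0 j * (g 0 j)^*.

Lemma nnform_std : nnform stdf.
Proof.
split; last by move=> f; apply: sumr_ge0 => j _; rewrite -normCK exprn_ge0.
split=> a f g h; rewrite /stdf mulr_sumr -big_split; apply: eq_bigr => j _;
  rewrite !mxE ?rmorphD ?rmorphM /=; ring.
Qed.

Lemma nnform_scale (c : C) (w : sform R n) : 0 <= c -> nnform w ->
  nnform (fun f g => c * w f g).
Proof.
move=> c0 [[h1 h2] hp]; split; last by move=> f; rewrite mulr_ge0.
split=> a f g h; rewrite ?h1 ?h2; ring.
Qed.

End LinAlg.


Lemma cvg0_ext (R : realType) (x y : nat -> R[i]) :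
  (forall k, x k = y k) -> cvg0 x -> cvg0 y.
Proof. by move=> e hx eps eps0; have [N HN] := hx eps eps0; exists N => k kN; rewrite -e HN. Qed.

End Helpers.
Import Helpers.

Theorem mainTheorem2 (R : realType) (n : nat) (t w : sform R n) :
  is_sesquilinear t -> nnform w ->
  ((left_bounded t w <-> left_regular t w) /\
   (left_regular t w <-> (forall f, kerf w f -> kerf t f))) /\
  (left_strongly_singular t w <->
     (forall h : 'rV[R[i]]_n, exists f g, kerf w f /\ kerf t g /\ h = f + g)).
Proof.
move=> ht hw; have [hwq hwp] := hw.
have ab : left_bounded t w -> left_regular t w.
  move=> [c [c0 hM]]; exists (fun f g => c * w f g); split => //.
  by move=> fs hw0 _; exact (cvg0_scale c hw0).
have bc : left_regular t w -> forall f, kerf w f -> kerf t f.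
  move=> [s1 [[hs1 [s2 [hs2 hb]]] hac]] f kf g.
  have w0 : w f f = 0 := kf f.
  have s10 : s1 f f = 0.
    apply: cvg0_const; apply: (hac (fun _ => f)).
      by rewrite w0; exact: cvg0_0.
    by move=> e e0; exists 0%N => k l _ _; rewrite subrr (s0l hs1.1) normr0.
  apply/eqP; rewrite -normr_eq0 eq_le normr_ge0 andbT.
  by have := hb f g; rewrite s10 sqrtC0 mul0r.
have ca : (forall f, kerf w f -> kerf t f) -> left_bounded t w.
  move=> hk.
  have [B hB] := @colspace R n n n (Ms w) (Ms t) (fun f hf => kerf_mx' ht (hk f (kerf_mx hwq hf))).
  pose A := (map_mx (fun x : R[i] => x^*) B)^T.
  have key : forall f g, t f g = w f (g *m A).
    move=> f g; rewrite (s_mx ht) (s_mx hwq) hB mulmxA.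
    set a := f *m Ms w.
    transitivity (\sum_(j < n) \sum_(k < n) (g 0 j)^* * (a 0 k * B k j)).
      by apply: eq_bigr => j _; rewrite mxE mulr_sumr.
    rewrite exchange_big; apply: eq_bigr => k _ /=.
    rewrite [(g *m A) 0 k]mxE rmorph_sum mulr_suml; apply: eq_bigr => j _.
    rewrite /A [_^T j k]mxE [map_mx _ _ _ _]mxE rmorphM /= conjCK; ring.
  exists 1; split; first exact: ltr01.
  split; first exact: nnform_scale ler01 hw.
  exists (fun f g => w (f *m A) (g *m A)); split; first exact: nnform_comp.
  by move=> f g; rewrite key mul1r; exact: CS hw _ _.
split; first by split; [split => // /bc /ca | split => // /ca].
split.
  move=> [s1 [[hs1 [s2 [hs2 hb]]] hsing]] h.
  have [fs [c1 c2]] := hsing h.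
  pose M := row_mx (Ms w) (Ms t); pose y := row_mx (0 : 'rV[R[i]]_n) (h *m Ms t).
  have cl : (y <= M)%MS.
    apply: (mx_closure (z := fs)) => j.
    apply: (cvg0_ext (x := fun k => (row_mx (fs k *m Ms w) (fs k *m Ms t - h *m Ms t)) 0 j)).
      by move=> k; rewrite /M /y mul_mx_row opp_row_mx add_row_mx oppr0 addr0.
    rewrite -(splitK j); case: (split j) => a /=.
      apply: (cvg0_ext (x := fun k => w (fs k) 'e_a)).
        by move=> k; rewrite row_mxEl (sMs hwq).
      apply: (cvg0_dom (B := w 'e_a 'e_a) (hwp _) c1) => k.
      by rewrite (ger0_norm (hwp _)); exact: CS2.
    apply: (cvg0_ext (x := fun k => - t (h - fs k) 'e_a)).
      by move=> k; rewrite row_mxEr (sBl ht) opprB !(sMs ht) !mxE.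
    apply: cvg0_opp.
    apply: (cvg0_dom (B := s2 'e_a 'e_a) (hs2.2 _) c2) => k.
    rewrite (ger0_norm (hs1.2 _)).
    have hh := hb (h - fs k) 'e_a.
    rewrite -(ler_pXn2r (n := 2)) // ?nnegrE ?mulr_ge0 ?sqrtC_ge0 ?hs1.2 ?hs2.2 // in hh.
    by rewrite exprMn !sqrtCK in hh.
  have /submxP [f0 hf0] := cl.
  move: hf0; rewrite /y /M mul_mx_row => /eq_row_mx [e1 e2].
  exists f0, (h - f0); split; first exact (kerf_mx hwq (esym e1)).
  split; last by rewrite addrC subrK.
  by apply: (kerf_mx ht); rewrite mulmxBl e2 subrr.
move=> hdec.
exists (fun f g => stdf (f *m Ms t) (g *m Ms t)); split.
  split; first exact: nnform_comp (nnform_std R n).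
  exists (stdf (R := R) (n := n)); split; first exact: nnform_std.
  move=> f g.
  have -> : t f g = stdf (f *m Ms t) g.
    by rewrite (s_mx ht) /stdf; apply: eq_bigr => j _; rewrite mulrC.
  exact: CS (nnform_std R n) _ _.
move=> f; have [a [b [ka [kb ->]]]] := hdec f.
exists (fun _ => a); split; first by rewrite (ka a); exact: cvg0_0.
have -> : a + b - a = b by rewrite addrC addKr.
rewrite (kerf_mx' ht kb) /stdf big1; first exact: cvg0_0.
by move=> j _; rewrite mxE mul0r.
Qed.
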